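(* Let $(\mathcal{C},V^-,\iota)$ be a pre-Clifford modular tensor category and let $X$ be a simple object with $V^-\boxtimes X\cong X$. Then there exists an isomorphism $\vartheta:V^-\boxtimes X\to X$ such that $-\vartheta\circ(\mathrm{Id}_{V^-}\boxtimes\vartheta)=\lambda_X\circ(\iota\boxtimes\mathrm{Id}_X)$ as maps $V^-\boxtimes V^-\boxtimes X\to X$, where $\lambda_X:1\boxtimes X\to X$ is the unit isomorphism.
   Context: A modular tensor category $\mathcal{C}$ is a semisimple ribbon category over $\mathbb{C}$ with finitely many isomorphism classes of simple objects and nondegenerate $s$-matrix, with tensor product $\boxtimes$, unit object $1$, braiding $\sigma_{X,Y}:X\boxtimes Y\to Y\boxtimes X$ and twist $\theta_X$ satisfying $\theta_{X\boxtimes Y}=\sigma_{Y,X}\sigma_{X,Y}(\theta_X\boxtimes\theta_Y)$. A pre-Clifford modular tensor category is a modular tensor category $\mathcal{C}$ together with an object $V^-$ and an isomorphism $\iota:V^-\boxtimes V^-\xrightarrow{\cong}1$ such that $\theta_{V^-}=-\mathrm{Id}_{V^-}$. *)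

(* Defs.v *)
From HB Require Import structures.
From mathcomp Require Import all_boot all_order all_algebra.
From mathcomp Require Import complex.
From mathcomp Require Import reals.
Set Implicit Arguments. Unset Strict Implicit. Unset Printing Implicit Defensive.
Import Order.TTheory GRing.Theory Num.Theory.
Local Open Scope ring_scope.

(* Inverses of the structure isomorphisms are
   included as data; the isomorphism equations are axioms below. *)
Record cat_data (K : fieldType) := CatData {
  obj : Type;
  Mor : obj -> obj -> vectType K;
  idm : forall a : obj, Mor a a;
  comp : forall a b c : obj, Mor b c -> Mor a b -> Mor a c;
  tens : obj -> obj -> obj;
  tensm : forall a b c d : obj, Mor a b -> Mor c d -> Mor (tens a c) (tens b d);
  tunit : obj;
  assoc : forall a b c : obj, Mor (tens (tens a b) c) (tens a (tens b c));
  assoc_inv : forall a b c : obj, Mor (tens a (tens b c)) (tens (tens a b) c);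
  lunit : forall a : obj, Mor (tens tunit a) a;
  lunit_inv : forall a : obj, Mor a (tens tunit a);
  runit : forall a : obj, Mor (tens a tunit) a;
  runit_inv : forall a : obj, Mor a (tens a tunit);
  braid : forall a b : obj, Mor (tens a b) (tens b a);
  braid_inv : forall a b : obj, Mor (tens b a) (tens a b);
  dual : obj -> obj;
  ev : forall a : obj, Mor (tens (dual a) a) tunit;
  coev : forall a : obj, Mor tunit (tens a (dual a));
  twist : forall a : obj, Mor a a;
  twist_inv : forall a : obj, Mor a a
}.

Arguments idm {K M} a : rename.
Arguments comp {K M a b c} : rename.
Arguments tens {K M} : rename.
Arguments tensm {K M a b c d} : rename.
Arguments tunit {K M} : rename.
Arguments assoc {K M} a b c : rename.
Arguments assoc_inv {K M} a b c : rename.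
Arguments lunit {K M} a : rename.
Arguments lunit_inv {K M} a : rename.
Arguments runit {K M} a : rename.
Arguments runit_inv {K M} a : rename.
Arguments braid {K M} a b : rename.
Arguments braid_inv {K M} a b : rename.
Arguments dual {K M} : rename.
Arguments ev {K M} a : rename.
Arguments coev {K M} a : rename.
Arguments twist {K M} a : rename.
Arguments twist_inv {K M} a : rename.

Declare Scope cat_scope.
Delimit Scope cat_scope with cat.
Notation "g \oc f" := (comp g f) (at level 45, left associativity) : cat_scope.
Notation "a (x) b" := (tens a b) (at level 40, left associativity) : cat_scope.
Notation "f <x> g" := (tensm f g) (at level 40, left associativity) : cat_scope.
Local Open Scope cat_scope.

Section Defs.
Variable K : fieldType.
Variable M : cat_data K.
Local Notation obj := (obj M).
Local Notation Mor := (@Mor K M).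

Definition is_iso (a b : obj) (f : Mor a b) : Prop :=
  exists g : Mor b a, g \oc f = idm a /\ f \oc g = idm b.

Definition isomorphic (a b : obj) : Prop := exists f : Mor a b, is_iso f.

Definition simple (a : obj) : Prop :=
  idm a != 0 /\ forall f : Mor a a, exists c : K, f = c *: idm a.

Definition dual_endo (a : obj) (f : Mor a a) : Mor (dual a) (dual a) :=
  lunit (dual a) \oc (ev a <x> idm (dual a))
  \oc ((idm (dual a) <x> f) <x> idm (dual a))
  \oc assoc_inv (dual a) a (dual a) \oc (idm (dual a) <x> coev a)
  \oc runit_inv (dual a).

(* right evaluation induced by the ribbon structure *)
Definition rev (a : obj) : Mor (a (x) dual a) tunit :=
  ev a \oc braid a (dual a) \oc (twist a <x> idm (dual a)).

Definition qtr (a : obj) (f : Mor a a) : Mor tunit tunit :=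
  rev a \oc (f <x> idm (dual a)) \oc coev a.

Definition category_axioms : Prop :=
  (forall a b c d (f : Mor a b) (g : Mor b c) (h : Mor c d),
       h \oc (g \oc f) = (h \oc g) \oc f) /\
  (forall a b (f : Mor a b), idm b \oc f = f /\ f \oc idm a = f) /\
  (forall a b c (k : K) (g : Mor b c) (f1 f2 : Mor a b),
       g \oc (k *: f1 + f2) = k *: (g \oc f1) + g \oc f2) /\
  (forall a b c (k : K) (g1 g2 : Mor b c) (f : Mor a b),
       (k *: g1 + g2) \oc f = k *: (g1 \oc f) + g2 \oc f).

Definition tensor_functor_axioms : Prop :=
  (forall a b c d (k : K) (f1 f2 : Mor a b) (g : Mor c d),
      (k *: f1 + f2) <x> g = k *: (f1 <x> g) + (f2 <x> g)) /\
  (forall a b c d (k : K) (f : Mor a b) (g1 g2 : Mor c d),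
      f <x> (k *: g1 + g2) = k *: (f <x> g1) + (f <x> g2)) /\
  (forall a b : obj, idm a <x> idm b = idm (a (x) b)) /\
  (forall a b c a' b' c' (f : Mor a b) (g : Mor b c)
          (f' : Mor a' b') (g' : Mor b' c'),
      (g \oc f) <x> (g' \oc f') = (g <x> g') \oc (f <x> f')).

Definition structure_iso_axioms : Prop :=
  (forall a b c : obj, assoc_inv a b c \oc assoc a b c = idm _ /\
                 assoc a b c \oc assoc_inv a b c = idm _) /\
  (forall a : obj, lunit_inv a \oc lunit a = idm _ /\ lunit a \oc lunit_inv a = idm _) /\
  (forall a : obj, runit_inv a \oc runit a = idm _ /\ runit a \oc runit_inv a = idm _) /\
  (forall a b : obj, braid_inv a b \oc braid a b = idm _ /\
               braid a b \oc braid_inv a b = idm _) /\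
  (forall a : obj, twist_inv a \oc twist a = idm _ /\ twist a \oc twist_inv a = idm _).

Definition naturality_axioms : Prop :=
  (forall a b c a' b' c' (f : Mor a a') (g : Mor b b') (h : Mor c c'),
      assoc a' b' c' \oc ((f <x> g) <x> h) = (f <x> (g <x> h)) \oc assoc a b c) /\
  (forall a b (f : Mor a b), lunit b \oc (idm tunit <x> f) = f \oc lunit a) /\
  (forall a b (f : Mor a b), runit b \oc (f <x> idm tunit) = f \oc runit a) /\
  (forall a b a' b' (f : Mor a a') (g : Mor b b'),
      braid a' b' \oc (f <x> g) = (g <x> f) \oc braid a b) /\
  (forall a b (f : Mor a b), twist b \oc f = f \oc twist a).

Definition coherence_axioms : Prop :=
  (forall a b c d : obj,
      assoc a b (c (x) d) \oc assoc (a (x) b) c d =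
      (idm a <x> assoc b c d) \oc assoc a (b (x) c) d
        \oc (assoc a b c <x> idm d)) /\
  (forall a b : obj,
      (idm a <x> lunit b) \oc assoc a tunit b = runit a <x> idm b) /\
  (forall a b c : obj,
      assoc b c a \oc braid a (b (x) c) \oc assoc a b c =
      (idm b <x> braid a c) \oc assoc b a c \oc (braid a b <x> idm c)) /\
  (forall a b c : obj,
      assoc_inv c a b \oc braid (a (x) b) c \oc assoc_inv a b c =
      (braid a c <x> idm b) \oc assoc_inv a c b \oc (idm a <x> braid b c)).

Definition rigidity_axioms : Prop :=
  forall a : obj,
    (idm a <x> ev a) \oc assoc a (dual a) a \oc (coev a <x> idm a) =
    runit_inv a \oc lunit a /\
    (ev a <x> idm (dual a)) \oc assoc_inv (dual a) a (dual a)
      \oc (idm (dual a) <x> coev a) =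
    lunit_inv (dual a) \oc runit (dual a).

Definition twist_axioms : Prop :=
  (forall a b : obj, twist (a (x) b) =
               braid b a \oc braid a b \oc (twist a <x> twist b)) /\
  (forall a : obj, dual_endo (twist a) = twist (dual a)).

Definition ribbon_axioms : Prop :=
  category_axioms /\ tensor_functor_axioms /\ structure_iso_axioms /\
  naturality_axioms /\ coherence_axioms /\ rigidity_axioms /\ twist_axioms.

Definition semisimple : Prop :=
  forall a : obj, exists (n : nat) (s : 'I_n -> obj)
    (p : forall i, Mor a (s i)) (q : forall i, Mor (s i) a),
    [/\ (forall i, simple (s i)),
        (forall i, p i \oc q i = idm (s i)),
        (forall i j, i != j -> p i \oc q j = 0) &
        \sum_(i < n) (q i \oc p i) = idm a].

Definition modular : Prop :=
  [/\ ribbon_axioms, semisimple, simple tunit &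
   (exists (n : nat) (s : 'I_n -> obj),
     [/\ (forall i, simple (s i)),
         (forall i j, isomorphic (s i) (s j) -> i = j),
         (forall x, simple x -> exists i, isomorphic x (s i)) &
         exists S : 'M[K]_n,
           (forall i j, qtr (braid (s j) (s i) \oc braid (s i) (s j))
                        = S i j *: idm tunit)
           /\ S \in unitmx])].

Definition pre_clifford (V : obj) (iota : Mor (V (x) V) tunit) : Prop :=
  [/\ modular, is_iso iota & twist V = - idm V].

End Defs.

(* Main.v *)
Require Import Defs.
From HB Require Import structures.
From mathcomp Require Import all_boot all_order all_algebra.
From mathcomp Require Import complex.
From mathcomp Require Import reals.
Import Order.TTheory GRing.Theory Num.Theory.
Local Open Scope ring_scope.
Local Open Scope cat_scope.

Lemma xxx (V : zmodType) (x : V) : x = x + x -> x = 0.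
Proof. by move/(congr1 (fun z => z - x)); rewrite subrr addrK. Qed.

Section Aux.
Context {K : fieldType}.
Context {M : cat_data K}.
Hypothesis Hcat : category_axioms M.
Hypothesis Hten : tensor_functor_axioms M.

Lemma compA' {a b c d : obj M} (f : @Mor K M a b) (g : @Mor K M b c) (h : @Mor K M c d) :
  h \oc (g \oc f) = (h \oc g) \oc f.
Proof. by case: Hcat. Qed.
Lemma idl {a b : obj M} (f : @Mor K M a b) : idm b \oc f = f.
Proof. by case: Hcat => _ [H _]; case: (H a b f). Qed.
Lemma idr {a b : obj M} (f : @Mor K M a b) : f \oc idm a = f.
Proof. by case: Hcat => _ [H _]; case: (H a b f). Qed.

Lemma comp0r {a b c : obj M} (g : @Mor K M b c) : g \oc (0 : @Mor K M a b) = 0.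
Proof.
case: Hcat => _ [_ [H _]].
have := H a b c 1 g 0 0. rewrite !scale1r !addr0 => E.
exact: xxx E.
Qed.
Lemma comp0l {a b c : obj M} (f : @Mor K M a b) : (0 : @Mor K M b c) \oc f = 0.
Proof.
case: Hcat => _ [_ [_ H]].
have := H a b c 1 0 0 f. rewrite !scale1r !addr0 => E.
exact: xxx E.
Qed.
Lemma compZr {a b c : obj M} (k : K) (g : @Mor K M b c) (f : @Mor K M a b) :
  g \oc (k *: f) = k *: (g \oc f).
Proof. case: Hcat => _ [_ [H _]]. by have := H a b c k g f 0; rewrite addr0 comp0r addr0. Qed.
Lemma compZl {a b c : obj M} (k : K) (g : @Mor K M b c) (f : @Mor K M a b) :
  (k *: g) \oc f = k *: (g \oc f).
Proof. case: Hcat => _ [_ [_ H]]. by have := H a b c k g 0 f; rewrite addr0 comp0l addr0. Qed.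

Lemma tens0r {a b c d : obj M} (f : @Mor K M a b) : f <x> (0 : @Mor K M c d) = 0.
Proof.
case: Hten => _ [H _].
have := H a b c d 1 f 0 0. rewrite !scale1r !addr0 => E.
exact: xxx E.
Qed.
Lemma tensZr {a b c d : obj M} (k : K) (f : @Mor K M a b) (g : @Mor K M c d) :
  f <x> (k *: g) = k *: (f <x> g).
Proof. case: Hten => _ [H _]. by have := H a b c d k f g 0; rewrite addr0 tens0r addr0. Qed.
Lemma tensid {a b : obj M} : idm a <x> idm b = idm (a (x) b).
Proof. by case: Hten => _ [_ [H _]]. Qed.
Lemma tenscomp {a b c a' b' c' : obj M} (f : @Mor K M a b) (g : @Mor K M b c) (f' : @Mor K M a' b') (g' : @Mor K M b' c') :
  (g \oc f) <x> (g' \oc f') = (g <x> g') \oc (f <x> f').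
Proof. by case: Hten => _ [_ [_ H]]. Qed.

Lemma iso_comp {a b c : obj M} (f : @Mor K M a b) (g : @Mor K M b c) : is_iso f -> is_iso g -> is_iso (g \oc f).
Proof.
move=> [fi [f1 f2]] [gi [g1 g2]]; exists (fi \oc gi); split.
  by rewrite compA' -(compA' g gi fi) g1 idr f1.
by rewrite compA' -(compA' fi f g) f2 idr g2.
Qed.
Lemma iso_tens {a b c d : obj M} (f : @Mor K M a b) (g : @Mor K M c d) : is_iso f -> is_iso g -> is_iso (f <x> g).
Proof.
move=> [fi [f1 f2]] [gi [g1 g2]]; exists (fi <x> gi); split.
  by rewrite -tenscomp f1 g1 tensid.
by rewrite -tenscomp f2 g2 tensid.
Qed.
Lemma iso_id {a : obj M} : is_iso (idm a).
Proof. by exists (idm a); rewrite idl. Qed.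
End Aux.

Theorem mainTheorem8 (R : realType) (M : cat_data (R[i])%C)
    (V : obj M) (iota : Mor (V (x) V) tunit)
    (HC : pre_clifford iota)
    (X : obj M) (HX : simple X) (HVX : isomorphic (V (x) X) X) :
  exists th : Mor (V (x) X) X,
    is_iso th /\
    - (th \oc (idm V <x> th) \oc assoc V V X) = lunit X \oc (iota <x> idm X).
Proof.
case: HC => [[Hrib _ _ _] Hiota _].
case: Hrib => Hcat [Hten [Hiso _]].
case: Hiso => Has [Hlu _].
case: HVX => f Hf.
set g := f \oc (idm V <x> f) \oc assoc V V X.
set h := lunit X \oc (iota <x> idm X).
have Hassoc : is_iso (assoc V V X).
  by exists (assoc_inv V V X); case: (Has V V X).
have Hg : is_iso g.
  rewrite /g.
  apply: (iso_comp Hcat) => //; apply: (iso_comp Hcat) => //.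
  by apply: (iso_tens Hten) => //; apply: (iso_id Hcat).
have Hh : is_iso h.
  rewrite /h.
  apply: (iso_comp Hcat) => //; last by exists (lunit_inv X); case: (Hlu X).
  by apply: (iso_tens Hten) => //; apply: (iso_id Hcat).
case: (Hh) => hi [hi1 hi2].
case: HX => HX0 HXs.
case: (HXs (g \oc hi)) => c Hc.
have Hgc : g = c *: h.
  by rewrite -(idr Hcat g) -hi1 (compA' Hcat) Hc (compZl Hcat) (idl Hcat).
have c0 : c != 0.
  apply/negP => /eqP c0; move: Hgc; rewrite c0 scale0r => g0.
  case: Hg => gi [_ gi2]; move: gi2; rewrite g0 (comp0l Hcat) => H.
  by move: HX0; rewrite -H eqxx.
set k := sqrtC (- c^-1).
have k2 : k ^+ 2 = - c^-1 by rewrite sqrtCK.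
have k0 : k != 0.
  apply/negP => /eqP k0; move: k2; rewrite k0 expr0n /= => /eqP.
  by rewrite eq_sym oppr_eq0 invr_eq0 (negPf c0).
exists (k *: f); split.
  case: Hf => fi [fi1 fi2]; exists (k^-1 *: fi).
  by rewrite !(compZl Hcat) !(compZr Hcat) !scalerA mulVf // mulfV // !scale1r.
rewrite (tensZr Hten) (compZl Hcat) (compZr Hcat) !(compZl Hcat) scalerA.
rewrite -/g Hgc scalerA -expr2 k2 mulNr mulVf // scaleN1r opprK; reflexivity.
Qed.
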